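(* For $n>0$, $a(n)=n$ if and only if the Fibonacci representation $(n)_F$ belongs to the regular language $1\,(00100^*1)^*\,\{\epsilon,\,01,\,010,\,0100\}$.
   Context: Let $(F_n)_{n\ge 0}$ be the Fibonacci numbers: $F_0=0$, $F_1=1$, $F_n=F_{n-1}+F_{n-2}$ for $n\ge 2$. Define $(a(n))_{n\ge 0}$ (OEIS A105774) by $a(0)=0$, $a(1)=1$, and for $n\ge 2$, $a(n)=F_{j+1}-a(n-F_j)$, where $j\ge 2$ is the unique index with $F_j<n\le F_{j+1}$. The Fibonacci (Zeckendorf) representation $(n)_F$ of $n\ge1$ is the unique binary string $e_1\cdots e_t$ with $e_1=1$, no two consecutive $1$'s, and $n=\sum_{i=1}^t e_iF_{t-i+2}$. In the regular expression, juxtaposition is concatenation, $\epsilon$ is the empty string, $w^*$ denotes zero or more repetitions of $w$, and the star applies to the immediately preceding symbol or parenthesized group (so $00100^*1$ denotes the strings $0010\,0^k\,1$, $k\ge 0$); a set of strings in braces denotes a choice of one of them. *)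

(* Defs.v *)
From mathcomp Require Import all_boot all_order all_algebra.
Set Implicit Arguments. Unset Strict Implicit. Unset Printing Implicit Defensive.
Import GRing.Theory Num.Theory.

Fixpoint fib (n : nat) : nat :=
  match n with
  | 0 => 0
  | 1 => 1
  | (m.+1 as k).+1 => fib k + fib m
  end.

(* For n >= 2: the unique j >= 2 with F_j < n <= F_{j+1}.
   It is the least j >= 2 with n <= F_{j+1}; we search j = i + 2 for i < n
   (enough, since F_{n+3} >= n). *)
Definition fibidx (n : nat) : nat :=
  (find (fun i => n <= fib (i + 3)) (iota 0 n)) + 2.

(* a(0) = 0, a(1) = 1, a(n) = F_{j+1} - a(n - F_j) for n >= 2 (OEIS A105774),
   computed in int (no truncated subtraction); the fuel argument n suffices
   since n - F_j < n. *)
Fixpoint a_aux (fuel n : nat) : int :=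
  match fuel with
  | 0 => 0
  | fuel'.+1 =>
      if n <= 1 then Posz n
      else let j := fibidx n in (Posz (fib j.+1) - a_aux fuel' (n - fib j))%R
  end.

Definition a (n : nat) : int := a_aux n n.

Fixpoint fibval (w : seq bool) : nat :=
  match w with
  | [::] => 0
  | b :: w' => b * fib (size w' + 2) + fibval w'
  end.

Definition is_fib_rep (w : seq bool) (n : nat) : Prop :=
  [/\ head false w = true,
      (forall i, i.+1 < size w -> ~~ (nth false w i && nth false w i.+1))
    & fibval w = n].

Definition block (k : nat) : seq bool :=
  [:: false; false; true; false] ++ nseq k false ++ [:: true].

Definition inL (w : seq bool) : Prop :=
  exists (ks : seq nat) (s : seq bool),
    s \in [:: [::]; [:: false; true]; [:: false; true; false];
              [:: false; true; false; false]]
    /\ w = true :: flatten (map block ks) ++ s.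

(* Main.v *)
Require Import Defs.
From mathcomp Require Import all_boot all_order all_algebra zify.
Set Implicit Arguments. Unset Strict Implicit. Unset Printing Implicit Defensive.
Import GRing.Theory Num.Theory.

Lemma fibSS k : fib k.+2 = fib k.+1 + fib k. Proof. by []. Qed.
Lemma fibS' j : 0 < j -> fib j.+1 = fib j + fib j.-1.
Proof. by case: j. Qed.

Lemma fib_leS k : fib k <= fib k.+1.
Proof. case: k => [|k] //; rewrite fibSS; lia. Qed.

Lemma fib_mono m n : m <= n -> fib m <= fib n.
Proof.
move=> /subnK <-; elim: (n - m) => [|d IH] //=.
by apply: (leq_trans IH); rewrite ?addSn; apply: fib_leS.
Qed.

Lemma fib_pos k : 0 < k -> 0 < fib k.
Proof.
elim: k => [|k IH] // _; case: k IH => [|k] IH //.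
rewrite fibSS; have := IH isT; lia.
Qed.

Lemma fib_ge k : k.+1 <= fib k.+2.
Proof.
elim: k => [|k IH] //; rewrite fibSS; have := fib_pos (k:=k.+1) isT; lia.
Qed.

Lemma fib_lt_inv m n : fib m < fib n -> m < n.
Proof. move=> H; rewrite ltnNge; apply/negP => /fib_mono; lia. Qed.

Lemma fibidx_spec n : 1 < n ->
  [/\ 2 <= fibidx n, fib (fibidx n) < n & n <= fib (fibidx n).+1].
Proof.
move=> n2; rewrite /fibidx.
set P := (fun i => n <= fib (i + 3)).
have hP : has P (iota 0 n).
  apply/hasP; exists n.-1; first by rewrite mem_iota; lia.
  rewrite /P; have -> : n.-1 + 3 = (n.-1 + 1).+2 by lia.
  have := fib_ge (n.-1 + 1); lia.
have := hP; rewrite has_find size_iota => fl.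
have := nth_find 0 hP; rewrite nth_iota // /P add0n => H3.
split; first by lia.
  case E: (find P (iota 0 n)) => [|f] //.
  have := before_find 0 (i := f) (a := P) (s := iota 0 n).
  rewrite E ltnSn nth_iota; last by lia.
  rewrite /P add0n => /(_ isT) /negbT; rewrite -ltnNge.
  by have -> : f + 3 = f.+1 + 2 by lia.
by have -> : (find P (iota 0 n) + 2).+1 = find P (iota 0 n) + 3 by lia.
Qed.

Lemma fibidx_uniq n j : 2 <= j -> fib j < n -> n <= fib j.+1 -> fibidx n = j.
Proof.
move=> j2 l u.
have n2 : 1 < n by have := fib_pos (k:=j) (ltnW j2); lia.
have [j'2 l' u'] := fibidx_spec n2.
have h1 : fib j < fib (fibidx n).+1 by lia.
have h2 : fib (fibidx n) < fib j.+1 by lia.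
have := fib_lt_inv h1; have := fib_lt_inv h2; lia.
Qed.

Lemma a_aux_fuel f1 f2 m : m <= f1 -> m <= f2 -> a_aux f1 m = a_aux f2 m.
Proof.
elim: f1 f2 m => [|f IH] [|g] m //=.
- by rewrite leqn0 => /eqP -> _.
- by move=> _; rewrite leqn0 => /eqP ->.
- move=> h1 h2; case: ifP => // m1.
  have : 0 < fib (fibidx m) by apply: fib_pos; rewrite /fibidx; lia.
  by move=> fp; congr (_ - _)%R; apply: IH; lia.
Qed.

Lemma a_rec n : 1 < n ->
  a n = (Posz (fib (fibidx n).+1) - a (n - fib (fibidx n)))%R.
Proof.
move=> n2; rewrite /a; case: n n2 => [|n'] // n2.
rewrite [LHS]/= ifF; last by lia.
have : 0 < fib (fibidx n'.+1) by apply: fib_pos; rewrite /fibidx; lia.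
by move=> fp; congr (_ - _)%R; apply: a_aux_fuel; lia.
Qed.

Lemma a1 : a 1 = 1%R. Proof. by []. Qed.

Lemma a_le x k : 1 <= x -> x <= fib k -> (1 <= a x)%R /\ (a x <= Posz (fib k))%R.
Proof.
elim/ltn_ind: x k => x IH k x1 xk.
case: (ltnP 1 x) => [x2|x1']; last first.
  have -> : x = 1 by lia. by rewrite a1; split => //; lia.
have [j2 l u] := fibidx_spec x2.
rewrite a_rec //.
have e := fibS' (j := fibidx x) (ltnW j2).
have jk : fibidx x < k by apply: fib_lt_inv; lia.
have := fib_mono jk.
have fp : 0 < fib (fibidx x) by apply: fib_pos; lia.
have [h1 h2] := IH (x - fib (fibidx x)) ltac:(lia) (fibidx x).-1 ltac:(lia) ltac:(lia).
move=> fm; split; lia.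
Qed.

Lemma a_bounds x : 1 < x ->
  (Posz (fib (fibidx x)) <= a x)%R /\ (a x < Posz (fib (fibidx x).+1))%R.
Proof.
move=> x2; have [j2 l u] := fibidx_spec x2.
rewrite a_rec //.
have e := fibS' (j := fibidx x) (ltnW j2).
have [h1 h2] := @a_le (x - fib (fibidx x)) (fibidx x).-1 ltac:(lia) ltac:(lia).
split; lia.
Qed.

Fixpoint noadj (w : seq bool) : bool :=
  match w with
  | b :: ((c :: _) as t) => ~~ (b && c) && noadj t
  | _ => true
  end.

Lemma noadj_nth w : noadj w <->
  (forall i, i.+1 < size w -> ~~ (nth false w i && nth false w i.+1)).
Proof.
elim: w => [|b t IH]; first by split.
case: t IH => [|c u] IH; first by split => // _ [].
rewrite /=; split.
- move=> /andP [bc nu] [|i] //= hi; by apply IH.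
- move=> H; apply/andP; split; first exact: (H 0).
  by apply/IH => i hi; apply: (H i.+1).
Qed.

Lemma noadj_false t : noadj (false :: t) = noadj t.
Proof. by case: t. Qed.

Lemma noadj_nseq r t : noadj (nseq r false ++ t) = noadj t.
Proof. by elim: r => [|r IH] //; rewrite [nseq _ _ ++ _]/= noadj_false. Qed.

Lemma fibval_nseq r t : fibval (nseq r false ++ t) = fibval t.
Proof. by elim: r. Qed.

Lemma fibval_cons b t : fibval (b :: t) = b * fib (size t).+2 + fibval t.
Proof. by rewrite /= addn2. Qed.

Lemma fibval_bound w : noadj w -> fibval w < fib (size w).+2.
Proof.
have [N] := ubnP (size w); elim: N w => // N IH w /ltnSE sz.
case: w IH sz => [|b t] IH sz //.
have st : size (b :: t) = (size t).+1 by [].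
rewrite st in sz *; clear st.
case: b; last first.
  rewrite noadj_false fibval_cons mul0n add0n => nt.
  have := IH t ltac:(lia) nt; have := fib_leS (size t).+2; lia.
case: t IH sz => [|c u] IH sz; first by [].
case: c sz => sz; first by [].
have e : noadj [:: true, false & u] = noadj (false :: u) by [].
rewrite e noadj_false => nu.
have := IH u ltac:(rewrite /= in sz; lia) nu.
rewrite !fibval_cons mul1n mul0n add0n.
have -> : size (false :: u) = (size u).+1 by [].
move=> h; rewrite !fibSS in h *; lia.
Qed.

Lemma fix_step i m : 2 <= i -> 1 <= m -> m <= fib i.-1 -> a m = Posz m ->
  a (fib i.+3 + fib i + m) = Posz (fib i.+3 + fib i + m).
Proof.
move=> i2 m1 mle am.
have ei := fibS' (ltnW i2).
have f4 := fibSS i.+2; have f3 := fibSS i.+1; have f2 := fibSS i.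
have mi : fib i.+1 <= fib i.+2 := fib_leS _.
have fp : 0 < fib i by apply: fib_pos; lia.
have n2 : 1 < fib i.+3 + fib i + m by lia.
rewrite a_rec // (@fibidx_uniq _ i.+3); try lia.
have -> : fib i.+3 + fib i + m - fib i.+3 = fib i + m by lia.
have m2 : 1 < fib i + m by lia.
rewrite a_rec // (@fibidx_uniq _ i); try lia.
have -> : fib i + m - fib i = m by lia.
rewrite am; lia.
Qed.

Lemma fibval_pref r w : fibval ([:: true; false; false; true; false] ++ nseq r false ++ w)
  = fib (r + size w + 6) + fib (r + size w + 3) + fibval w.
Proof.
rewrite !cat_cons cat0s !fibval_cons fibval_nseq !mul1n !mul0n !add0n.
have -> : size [:: false, false, true, false & nseq r false ++ w] = r + size w + 4.
  by rewrite [size _]/= size_cat size_nseq; lia.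
have -> : size (false :: nseq r false ++ w) = r + size w + 1.
  by rewrite [size _]/= size_cat size_nseq; lia.
have -> : (r + size w + 4).+2 = r + size w + 6 by lia.
have -> : (r + size w + 1).+2 = r + size w + 3 by lia.
by rewrite addnA.
Qed.

Lemma noadj_pref r w : noadj ([:: true; false; false; true; false] ++ nseq r false ++ w) = noadj w.
Proof.
have e : forall X, noadj ([:: true; false; false; true; false] ++ X) = noadj (false :: X) by [].
by rewrite e noadj_false noadj_nseq.
Qed.

Lemma pref_block r X : [:: true; false; false; true; false] ++ nseq r false ++ true :: X
  = true :: block r ++ X.
Proof. by rewrite /block /= -!catA. Qed.

Lemma fibval_true t : 1 <= fibval (true :: t).
Proof. rewrite fibval_cons /nat_of_bool mul1n; have := fib_pos (k := (size t).+2) isT; lia. Qed.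

Definition Sset : seq (seq bool) := [:: [::]; [:: false; true]; [:: false; true; false];
              [:: false; true; false; false]].

Lemma bwd ks : forall S w, S \in Sset ->
  w = true :: flatten (map block ks) ++ S -> noadj w -> a (fibval w) = Posz (fibval w).
Proof.
elim: ks => [|k ks IH] S w HS ->.
  move: HS; rewrite !inE => /or4P [] /eqP -> _; by vm_compute.
set w' := true :: flatten (map block ks) ++ S.
have ew : true :: flatten (map block (k :: ks)) ++ S =
          [:: true; false; false; true; false] ++ nseq k false ++ w'.
  by rewrite /w' pref_block /= catA.
rewrite ew noadj_pref fibval_pref => nw.
have := IH S w' HS erefl nw.
have fb := fibval_bound nw.
have w1 : 1 <= fibval w'.
  by rewrite /w'; apply: fibval_true.
have := @fix_step (k + size w' + 3) (fibval w') ltac:(lia) w1.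
have -> : (k + size w' + 3).+3 = k + size w' + 6 by lia.
move=> H1 H2; apply: H1 => //.
have -> : (k + size w' + 3).-1 = k + size w' + 2 by lia.
have := @fib_mono (size w').+2 (k + size w' + 2) ltac:(lia); lia.
Qed.

Lemma fwd n : 0 < n -> a n = Posz n -> exists w, is_fib_rep w n /\ inL w.
Proof.
elim/ltn_ind: n => n IH n0 Hfix.
case: (ltnP 1 n) => [n2|n1]; last first.
  have -> : n = 1 by lia.
  exists [:: true]; split; last by exists [::], [::].
  by split => //; case.
have [j2 lj uj] := fibidx_spec n2.
have Ha := a_rec n2.
set j := fibidx n in j2 lj uj Ha.
set m := n - fib j in Ha.
have em : n = fib j + m by rewrite /m; lia.
have ej := fibS' (ltnW j2).
case: (ltnP 1 m) => [m2|m1]; last first.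
  have e1 : m = 1 by lia.
  rewrite e1 a1 in Ha.
  have f2 : fib j.-1 = 2 by lia.
  have j4 : j = 4.
    case: (ltnP j 4) => h.
      have := @fib_mono j.-1 2 ltac:(lia); have : fib 2 = 1 by []; lia.
    case: (ltnP 4 j) => h'; last by lia.
    have := @fib_mono 4 j.-1 ltac:(lia); have : fib 4 = 3 by []; lia.
  have -> : n = 4 by rewrite em e1 j4.
  exists [:: true; false; true]; split; last by exists [::], [:: false; true].
  by split => //; case => [|[|i]].
have [i2 li ui] := fibidx_spec m2.
have Hm := a_rec m2.
set i := fibidx m in i2 li ui Hm.
set m' := m - fib i in Hm.
have em' : m = fib i + m' by rewrite /m'; lia.
have ei := fibS' (ltnW i2).
have m'1 : 1 <= m' by lia.
have m'le : m' <= fib i.-1 by lia.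
have [b1 b2] := a_le m'1 m'le.
have ij : i < j.-1 by apply: fib_lt_inv; lia.
have fii : fib i.-1 <= fib i by apply: fib_mono; lia.
have fi1 := fib_leS i.
have fi2 := fibSS i.
have key : j.-1 = i.+2.
  case: (ltngtP j.-1 i.+2) => h //.
    have e : j.-1 = i.+1 by lia.
    rewrite e in ej; lia.
  have := @fib_mono i.+3 j.-1 ltac:(lia).
  have := fibSS i.+1; lia.
rewrite key in ej.
have ej3 : j = i.+3 by lia.
have Hm' : a m' = Posz m' by lia.
have [w' [[hw' adjw' vw'] Lw']] := IH m' ltac:(lia) m'1 Hm'.
case: (ltnP m' (fib i.-1)) => hm'; last first.
  have em'f : m' = fib i.-1 by lia.
  case: (ltnP 1 m') => m'2.
    have [p2 lp up] := fibidx_spec m'2; have [_ bp] := a_bounds m'2.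
    have pl : fibidx m' < i.-1 by apply: fib_lt_inv; lia.
    have := fib_mono pl; lia.
  have fi : fib i.-1 = 1 by lia.
  have : i = 2 \/ i = 3.
    case: (ltnP i 4) => h; first by lia.
    have := @fib_mono 3 i.-1 ltac:(lia); have : fib 3 = 2 by []; lia.
  have -> : n = fib j + fib i + m' by lia.
  rewrite ej3 (_ : m' = 1); last by lia.
  case=> ->.
    exists [:: true; false; true; false]; split; last by exists [::], [:: false; true; false].
    by split => //; case => [|[|[|i']]].
  exists [:: true; false; true; false; false]; split; last by exists [::], [:: false; true; false; false].
  by split => //; case => [|[|[|[|i']]]].
case: w' hw' adjw' vw' Lw' => [|b t] // hb adjw' vw' Lw'.
rewrite /= in hb; rewrite hb in adjw' vw' Lw'.
have vw2 := vw'; rewrite fibval_cons /nat_of_bool mul1n in vw2.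
have ts : (size t).+2 < i.-1 by apply: fib_lt_inv; lia.
set r := i - size t - 4.
exists ([:: true; false; false; true; false] ++ nseq r false ++ true :: t); split.
  split => //.
    apply/noadj_nth; rewrite noadj_pref; exact/noadj_nth.
  rewrite fibval_pref vw' [size _]/=.
  have -> : r + (size t).+1 + 6 = i.+3 by rewrite /r; lia.
  have -> : r + (size t).+1 + 3 = i by rewrite /r; lia.
  rewrite em em' ej3; lia.
case: Lw' => ks [S [HS ew]].
exists (r :: ks), S; split => //.
by rewrite ew pref_block /= catA.
Qed.

Unset Implicit Arguments.

Theorem theorem21 (n : nat) : 0 < n ->
  (a n = Posz n <-> exists w : seq bool, is_fib_rep w n /\ inL w).
Proof.
move=> n0; split; first exact: fwd.
case=> w [[hw adj <-] [ks [S [HS ew]]]].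
apply: (bwd (S := S) (ks := ks)) => //.
exact/noadj_nth.
Qed.
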